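(* Let $\hat G$ be a multigraph, let $f\in E(\hat G)$ be an edge with endpoints $u,v$, and let $G=\hat G\setminus f$ be the graph on the same node set with $f$ removed. Identify $\mathcal C_G$ with $\mathcal C_{\hat G}\cap\{x: x_f=0\}$. Let $\psi$ be a height function inducing a good triangulation $\mathcal T_{\hat G}$ of $\mathcal C_{\hat G}$, and let $\mathcal T_G$ be the triangulation of $\mathcal C_G$ induced by the restriction of $\psi$ to the lattice points of $\mathcal C_G$. Then for a set $S$ of lattice points of $\mathcal C_G$ the following are equivalent: (1) $S$ is a simplex of $\mathcal T_G$; (2) $S\cup\{\widetilde e_f\}$ is a simplex of $\mathcal T_{\hat G}$; (3) at least one of $S\cup\{e_f\}$, $S\cup\{\overrightarrow e_f\}$, $S\cup\{\overleftarrow e_f\}$ is a simplex of $\mathcal T_{\hat G}$.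
   Context: For a finite undirected multigraph $G=(V,E)$ (loops, parallel edges and isolated nodes allowed) with $n=|V|$, $m=|E|$, work in $\mathbb{R}^V\times\mathbb{R}^E\cong\mathbb{R}^{n+m}$ with standard basis vectors $e_u$ ($u\in V$), $e_f$ ($f\in E$). Fix for each edge $f$ an ordering $(u,v)$ of its endpoints ($u=v$ for a loop) and set $\widetilde e_f=e_u+e_v-e_f$, $\overleftarrow e_f=e_u-e_v+e_f$, $\overrightarrow e_f=-e_u+e_v+e_f$ (so for a loop $\overleftarrow e_f=\overrightarrow e_f=e_f$). The cosmological polytope $\mathcal C_G$ is the convex hull of $\{e_f,\widetilde e_f,\overleftarrow e_f,\overrightarrow e_f: f\in E\}\cup\{e_u: u\in V\}$; these are exactly its lattice points, and it is an $(n+m-1)$-dimensional polytope in the hyperplane $\sum_i x_i=1$. A good triangulation of $\mathcal C_G$ is a regular triangulation (induced by a height function $\psi$ on the lattice points of $\mathcal C_G$) whose vertex set is the set of all lattice points of $\mathcal C_G$ and which contains the standard simplex $\mathrm{conv}\{e_u,e_f: u\in V, f\in E\}$ as a maximal cell; simplices of a triangulation are identified with their vertex sets. *)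

(* Defs.v *)
From HB Require Import structures.
From mathcomp Require Import all_boot all_order all_algebra.
From mathcomp Require Import finmap.
Set Implicit Arguments. Unset Strict Implicit. Unset Printing Implicit Defensive.
Import Order.TTheory GRing.Theory Num.Theory.
Local Open Scope ring_scope.


Notation point R V E := {ffun (V + E)%type -> R}.

Section Cosmological.
Variables (R : realFieldType) (V E : finType).

Local Notation pt := (point R V E).

Definition eV (u : V) : pt := [ffun i => if i == inl u then 1 else 0].
Definition eE (g : E) : pt := [ffun i => if i == inr g then 1 else 0].

(* A multigraph on V with edge set E: each edge g has a fixed ordering
   (ends g).1, (ends g).2 of its endpoints (equal for a loop). *)
Variable ends : E -> V * V.

Definition etilde (g : E) : pt := eV (ends g).1 + eV (ends g).2 - eE g.
Definition eleft  (g : E) : pt := eV (ends g).1 - eV (ends g).2 + eE g.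
Definition eright (g : E) : pt := - eV (ends g).1 + eV (ends g).2 + eE g.

(* Lattice points of the cosmological polytope of the subgraph with all
   nodes of V and edge set D (as a subset of E), embedded in R^V x R^E
   (coordinates of edges outside D are 0). *)
Definition latt (D : pred E) : pred pt := fun x =>
  [exists u : V, x == eV u] ||
  [exists g in D, [|| x == eE g, x == etilde g, x == eleft g | x == eright g]].

(* Cells of the regular subdivision of the point configuration A induced
   by the height function psi: S is the set of points of A lying on a
   lower face of the lifted configuration, i.e. there is an affine
   function h(x) = <c,x> + c0 with h <= psi on A, and h = psi exactly on S. *)
Definition rcell (A : pred pt) (psi : pt -> R) (S : {fset pt}) : Prop :=
  {subset S <= A} /\
  exists (c : pt) (c0 : R), forall x, A x ->
    (\sum_i c i * x i + c0 <= psi x) /\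
    ((\sum_i c i * x i + c0 == psi x) = (x \in S)).

Definition aff_indep (S : {fset pt}) : Prop :=
  forall lam : pt -> R,
    \sum_(x <- S) lam x = 0 -> (forall i, \sum_(x <- S) lam x * x i = 0) ->
    forall x, x \in S -> lam x = 0.

Definition std_simplex : {fset pt} :=
  ([fset eV u | u in enum V] `|` [fset eE g | g in enum E])%fset.

(* psi induces a good triangulation of the cosmological polytope of the
   whole graph (V, E, ends). *)
Definition good_height (psi : pt -> R) : Prop :=
  [/\ (* the regular subdivision is a triangulation *)
      (forall S, rcell (latt predT) psi S -> aff_indep S),
      (* its vertex set is the set of all lattice points *)
      (forall x, latt predT x -> exists S, rcell (latt predT) psi S /\ x \in S),
      rcell (latt predT) psi std_simplex &
      (forall S, rcell (latt predT) psi S -> (std_simplex `<=` S)%fset -> S = std_simplex)].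

End Cosmological.

(* Main.v *)
Require Import Defs.
From HB Require Import structures.
From mathcomp Require Import all_boot all_order all_algebra finmap.
From mathcomp Require Import ring lra.
Set Implicit Arguments. Unset Strict Implicit. Unset Printing Implicit Defensive.
Import Order.TTheory GRing.Theory Num.Theory.
Local Open Scope ring_scope.
Lemma in_fsetU1 (K : choiceType) (x a : K) (A : {fset K}) :
  (x \in (a |` A)%fset) = (x == a) || (x \in A).
Proof. by rewrite !inE. Qed.

Section S.
Variables (R : realFieldType) (V E : finType).
Local Notation pt := (point R V E).
Definition lf (c x : pt) : R := \sum_i c i * x i.
Lemma lfD c (x y : pt) : lf c (x + y) = lf c x + lf c y.
Proof. by rewrite /lf -big_split /=; apply: eq_bigr => i _; rewrite ffunE mulrDr. Qed.
Lemma lfN c (x : pt) : lf c (- x) = - lf c x.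
Proof. by rewrite /lf -sumrN; apply: eq_bigr => i _; rewrite ffunE mulrN. Qed.
Lemma lfB c (x y : pt) : lf c (x - y) = lf c x - lf c y.
Proof. by rewrite lfD lfN. Qed.
Lemma lfMn c (x : pt) n : lf c (x *+ n) = lf c x *+ n.
Proof. elim: n => [|n IH]; first by rewrite /lf big1 // => i _; rewrite ffunE mulr0.
by rewrite !mulrS lfD IH. Qed.
Lemma lfDl c d (x : pt) : lf (c + d) x = lf c x + lf d x.
Proof. by rewrite /lf -big_split /=; apply: eq_bigr => i _; rewrite ffunE mulrDl. Qed.
Lemma lf_lin (a : R) (c d x : pt) : lf [ffun i => c i + a * d i] x = lf c x + a * lf d x.
Proof. by rewrite /lf mulr_sumr -big_split; apply: eq_bigr => i _; rewrite ffunE mulrDl mulrA. Qed.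
Lemma lf_eV c u : lf c (eV R E u) = c (inl u).
Proof. rewrite /lf (bigD1 (inl u)) //= big1 ?ffunE ?eqxx ?mulr1 ?addr0 //.
by move=> i /negbTE Hi; rewrite ffunE Hi mulr0. Qed.
Lemma lf_eE c g : lf c (eE R V g) = c (inr g).
Proof. rewrite /lf (bigD1 (inr g)) //= big1 ?ffunE ?eqxx ?mulr1 ?addr0 //.
by move=> i /negbTE Hi; rewrite ffunE Hi mulr0. Qed.
Lemma lf_eEc (x : pt) g : lf (eE R V g) x = x (inr g).
Proof. rewrite /lf (bigD1 (inr g)) //= big1 ?ffunE ?eqxx ?mul1r ?addr0 //.
by move=> i /negbTE Hi; rewrite ffunE Hi mul0r. Qed.

Lemma sum_delta (T : eqType) (s : seq T) (a : T) (F : T -> R) :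
  uniq s -> a \in s -> \sum_(x <- s) (a == x)%:R * F x = F a.
Proof.
move=> Us As; rewrite (big_rem a) //= eqxx mul1r big_seq big1 ?addr0 //.
move=> x Hx; case: eqP => [Ex|]; last by rewrite mul0r.
by move: Hx; rewrite -Ex mem_rem_uniqF.
Qed.

Local Notation N := (#|{: (V + E)%type}|.+1).
Definition liftc (x : pt) (j : 'I_N) : R :=
  if unlift ord0 j is Some j' then x (enum_val j') else 1.

Lemma sum_liftc (x : pt) (g : 'I_N -> R) :
  \sum_j liftc x j * g j = \sum_i x i * g (lift ord0 (enum_rank i)) + g ord0.
Proof.
rewrite big_ord_recl /liftc unlift_none mul1r addrC; congr (_ + _).
rewrite [RHS](big_enum_val (A := predT)) /=. apply: eq_bigr => i _.
by rewrite liftK enum_valK.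
Qed.

Lemma liftc_lift (x : pt) i : liftc x (lift ord0 (enum_rank i)) = x i.
Proof. by rewrite /liftc liftK enum_rankK. Qed.

Lemma separate (P : {fset pt}) (b : pt) : b \notin P -> aff_indep (b |` P)%fset ->
  exists (cl : pt) (cl0 : R), (forall x, x \in P -> lf cl x + cl0 = 0) /\ lf cl b + cl0 = -1.
Proof.
move=> bP Hind.
pose k := size P.
pose M := \matrix_(i < k, j < N) liftc (nth 0 P i) j.
pose rb := \row_(j < N) liftc b j.
have [/submxP [u Hu] | Hn] := boolP (rb <= M)%MS.
  exfalso.
  pose lam x := - (x == b)%:R + \sum_(i < k) (nth 0 P i == x)%:R * u 0 i.
  have key : forall g : pt -> R, \sum_(x <- P) (\sum_(i<k) (nth 0 P i == x)%:R * u 0 i) * g x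
      = \sum_(i<k) u 0 i * g (nth 0 P i).
    move=> g; under eq_bigr do rewrite mulr_suml.
    rewrite exchange_big /=; apply: eq_bigr => i _.
    under eq_bigr do rewrite -mulrA.
    by rewrite sum_delta ?fset_uniq // mem_nth.
  have Hc : forall j, liftc b j = \sum_(i<k) u 0 i * liftc (nth 0 P i) j.
    move=> j; move/matrixP: (Hu) => /(_ 0 j); rewrite !mxE => ->.
    by apply: eq_bigr => i _; rewrite mxE.
  have lamb : lam b = -1.
    rewrite /lam eqxx big1 ?addr0 // => i _.
    case: eqP => [E1|]; last by rewrite mul0r.
    by move: bP; rewrite -E1 mem_nth.
  have lamP : forall x, x \in P -> lam x = \sum_(i<k) (nth 0 P i == x)%:R * u 0 i.
    move=> x xP; rewrite /lam; case: eqP => [Exb|]; first by move: bP; rewrite -Exb xP.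
    by rewrite oppr0 add0r.
  have H1 : \sum_(x <- (b |` P)%fset) lam x = 0.
    rewrite big_fsetU1 //= lamb big_seq.
    under eq_bigr => x xP do rewrite lamP //.
    rewrite -big_seq (eq_bigr (fun x => (\sum_(i<k) (P`_i == x)%:R * u 0 i) * (fun=> 1) x));
      last by move=> *; rewrite mulr1.
    rewrite (key (fun=> 1)).
    have := Hc ord0; rewrite /liftc unlift_none => <-.
    by rewrite addNr.
  have H2 : forall i, \sum_(x <- (b |` P)%fset) lam x * x i = 0.
    move=> i; rewrite big_fsetU1 //= lamb big_seq.
    under eq_bigr => x xP do rewrite lamP //.
    rewrite -big_seq (key (fun x => x i)).
    have := Hc (lift ord0 (enum_rank i)); rewrite liftc_lift => ->.
    under eq_bigr do rewrite liftc_lift. by rewrite mulN1r addNr.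
  have := Hind lam H1 H2 b (fset1U1 b P); rewrite lamb => /eqP.
  by rewrite oppr_eq0 oner_eq0.
rewrite submxE in Hn.
pose K := cokermx M.
have [j Hj] : exists j, (rb *m K) 0 j != 0.
  have : [exists j, (rb *m K) 0 j != 0].
    apply: contraR Hn => /existsPn H; apply/eqP/matrixP => i j.
    rewrite ord1 [in RHS]mxE; apply/eqP; exact: negbNE (H j).
  by case/existsP => j Hj; exists j.
set a := (rb *m K) 0 j in Hj.
exists [ffun i => - K (lift ord0 (enum_rank i)) j / a], (- K ord0 j / a).
have gen : forall x, lf [ffun i => - K (lift ord0 (enum_rank i)) j / a] x + (- K ord0 j / a)
    = - (\sum_l liftc x l * K l j) / a.
  move=> x; rewrite sum_liftc /lf opprD mulrDl; congr (_ + _).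
  rewrite -sumrN mulr_suml.
  by apply: eq_bigr => i _; rewrite ffunE !mulNr mulrAC (mulrC (K _ _)).
split.
  move=> x xP; rewrite gen.
  have ix : (index x P < k)%N by rewrite index_mem.
  move/matrixP: (mulmx_coker M) => /(_ (Ordinal ix) j); rewrite !mxE.
  under eq_bigr do rewrite mxE /= nth_index //.
  by move=> ->; rewrite oppr0 mul0r.
rewrite gen.
have -> : \sum_l liftc b l * K l j = a.
  by rewrite /a mxE; under [RHS]eq_bigr => l _ do rewrite mxE.
by rewrite mulNr divff.
Qed.

Lemma eps_aux (e e0 l m : R) : 0 < e -> e <= e0 -> 0 < m -> e0 * l < m -> e * l < m.
Proof.
move=> ep ee0 mp H; case: (lerP 0 l) => Hl.
  by apply: le_lt_trans H; rewrite ler_wpM2r.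
by apply: lt_trans mp; rewrite pmulr_rlt0.
Qed.

Lemma eps_exists (s : seq pt) (P : pred pt) (m l : pt -> R) :
  (forall x, x \in s -> P x -> 0 < m x) ->
  exists2 e, 0 < e & forall x, x \in s -> P x -> e * l x < m x.
Proof.
elim: s => [|y s IH] Hm; first by exists 1 => // x; rewrite in_nil.
have [e0 e0p He0] := IH (fun x xs => Hm x ltac:(by rewrite in_cons xs orbT)).
case Py: (P y); last first.
  exists e0 => // x; rewrite in_cons => /orP [/eqP -> | xs]; first by rewrite Py.
  exact: He0.
have my : 0 < m y by apply: Hm; rewrite ?mem_head.
set d := m y / (`|l y| + 1).
have dp : 0 < d by rewrite divr_gt0 // ltr_wpDl.
have gr : Num.min e0 d <= d by rewrite ge_min lexx orbT.
have gl : Num.min e0 d <= e0 by rewrite ge_min lexx.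
exists (Num.min e0 d); first by rewrite lt_min e0p dp.
move=> x; rewrite in_cons => /orP [/eqP -> _ | xs Px].
  apply: (le_lt_trans (ler_wpM2l _ (ler_norm (l y)))); first by rewrite le_min (ltW e0p) (ltW dp).
  apply: (le_lt_trans (ler_wpM2r (normr_ge0 _) gr)) .
  rewrite /d mulrAC ltr_pdivrMr ?ltr_wpDl // ltr_pM2l //.
  by rewrite ltrDl.
apply: (eps_aux _ gl); first by rewrite lt_min e0p dp.
  by apply: Hm Px; rewrite in_cons xs orbT.
exact: He0.
Qed.

Lemma face_remove (A : pred pt) (L : seq pt) psi C b :
  (forall x, A x -> x \in L) -> rcell A psi C -> aff_indep C -> b \in C ->
  rcell A psi (C `\ b)%fset.
Proof.
move=> AL [CA [c [c0 Hc]]] Hind bC.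
have bn : b \notin (C `\ b)%fset by rewrite fsetD11.
have Hind' : aff_indep (b |` (C `\ b))%fset by rewrite fsetD1K.
have [cl [cl0 [H0 Hb]]] := separate bn Hind'.
have Hpos : forall x, x \in L -> (A x && (x \notin C)) -> 0 < psi x - (lf c x + c0).
  move=> x _ /andP [Ax xC]; have [H1 H2] := Hc x Ax.
  rewrite subr_gt0 lt_def H1 andbT.
  by rewrite eq_sym; apply/negP => /eqP E1; move: H2; rewrite -/(lf c x) E1 eqxx (negbTE xC).
have [e ep He] := @eps_exists L _ _ (fun x => lf cl x + cl0) Hpos.
split.
  by move=> x /fsetD1P [_ /CA].
exists [ffun i => c i + e * cl i], (c0 + e * cl0) => x Ax.
rewrite -/(lf _ x) lf_lin addrACA -mulrDr.
have [H1 H2] := Hc x Ax; move: H1 H2; rewrite -/(lf c x) => H1 H2.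
have [xb | xnb] := eqVneq x b.
  subst x; rewrite Hb mulrN1 (negbTE bn).
  have /eqP E1 : lf c b + c0 == psi b by rewrite H2.
  rewrite E1 lerBlDr lerDl (ltW ep); split => //.
  by apply/negbTE; rewrite -subr_eq0 addrAC subrr add0r oppr_eq0 gt_eqF.
case xC: (x \in C).
  have xD : x \in (C `\ b)%fset by rewrite in_fsetD1 xnb xC.
  rewrite H0 // mulr0 addr0 xD; split => //; by rewrite H2.
have xD : x \notin (C `\ b)%fset by rewrite in_fsetD1 xC andbF.
have := He x (AL x Ax); rewrite Ax xC /= => /(_ isT) Hlt.
rewrite (negbTE xD).
have Hl2 : lf c x + c0 + e * (lf cl x + cl0) < psi x by rewrite addrC -ltrBrDr.
by split; [rewrite ltW | rewrite lt_eqF].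
Qed.

Lemma face_sub (A : pred pt) (L : seq pt) psi :
  (forall x, A x -> x \in L) -> (forall C, rcell A psi C -> aff_indep C) ->
  forall C T, rcell A psi C -> (T `<=` C)%fset -> rcell A psi T.
Proof.
move=> AL Hind C T.
move: {2}#|` (C `\` T)%fset| (erefl #|` (C `\` T)%fset|) => n.
elim: n C => [|n IH] C Hn HC HT.
  have /eqP : #|` (C `\` T)%fset| = 0%N by [rewrite Hn | rewrite -Hn].
  rewrite cardfs_eq0 fsetD_eq0 => CT.
  by have -> : T = C by apply/eqP; rewrite eqEfsubset HT CT.
have Hn' : #|` (C `\` T)%fset| = n.+1 by [rewrite Hn | rewrite -Hn].
have : (C `\` T)%fset != fset0 by rewrite -cardfs_eq0 Hn'.
case/fset0Pn => b; rewrite in_fsetD => /andP [bT bC].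
apply: (IH (C `\ b)%fset).
- have -> : ((C `\ b) `\` T = (C `\` T) `\ b)%fset.
    by apply/fsetP => x; rewrite !inE; case: (x == b); case: (x \in T); case: (x \in C).
  have := cardfsD1 b (C `\` T)%fset; rewrite in_fsetD bT bC Hn' /=.
  by move=> [->].
- exact: face_remove AL HC (Hind _ HC) bC.
apply/fsubsetP => x xT; rewrite in_fsetD1 (fsubsetP HT) // andbT.
by apply: contraNneq bT => <-.
Qed.
End S.

Section G.
Variables (R : realFieldType) (V E : finType) (ends : E -> V * V) (f : E).
Local Notation pt := (point R V E).
Local Notation ef := (eE R V f).
Local Notation et := (etilde R ends f).
Local Notation el := (eleft R ends f).
Local Notation er := (eright R ends f).
Local Notation eu := (eV R E (ends f).1).
Local Notation ev := (eV R E (ends f).2).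

Lemma inr_eq (a b : E) : (inr a == inr b :> (V + E)%type) = (a == b).
Proof. by apply/eqP/eqP => [[]|->]. Qed.
Lemma ifr (a b : E) : (if inr a == inr b :> (V + E)%type then 1 else 0 : R) = (b == a)%:R.
Proof. by case: eqP => [[->]|H]; rewrite ?eqxx //; case: eqP => // E1; case: H; rewrite E1. Qed.
Lemma inl_inr (a : V) (b : E) : (inl a == inr b :> (V + E)%type) = false.
Proof. by []. Qed.

Lemma eV_f (w : V) : eV R E w (inr f) = 0. Proof. by rewrite ffunE. Qed.
Lemma eE_f g : eE R V g (inr f) = (g == f)%:R. Proof. by rewrite ffunE ifr. Qed.
Lemma et_f g : etilde R ends g (inr f) = - (g == f)%:R.
Proof. by rewrite /etilde !ffunE !ifr add0r sub0r. Qed.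
Lemma el_f g : eleft R ends g (inr f) = (g == f)%:R.
Proof. by rewrite /eleft !ffunE !ifr subr0 add0r. Qed.
Lemma er_f g : eright R ends g (inr f) = (g == f)%:R.
Proof. by rewrite /eright !ffunE !ifr oppr0 !add0r. Qed.

Definition LL : seq pt := [seq eV R E u | u <- enum V] ++
  flatten [seq [:: eE R V g; etilde R ends g; eleft R ends g; eright R ends g] | g <- enum E].

Lemma latt_LL D (x : pt) : latt ends D x -> x \in LL.
Proof.
rewrite /latt /LL mem_cat => /orP [/existsP [u /eqP ->] | /existsP [g /andP [_ H]]].
  by rewrite map_f ?mem_enum.
apply/orP; right; apply/flatten_mapP; exists g; first by rewrite mem_enum.
by rewrite !inE.
Qed.

Lemma lattC1_f (x : pt) : latt ends (predC1 f) x -> x (inr f) = 0.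
Proof.
case/orP => [/existsP [u /eqP ->] | /existsP [g /andP [gf H]]]; first exact: eV_f.
rewrite inE /= in gf.
by case/or4P: H => /eqP ->; rewrite ?eE_f ?et_f ?el_f ?er_f (negbTE gf) ?oppr0.
Qed.

Lemma latt_class (x : pt) : latt ends predT x ->
  latt ends (predC1 f) x \/ [\/ x = ef, x = et, x = el | x = er].
Proof.
case/orP => [H | /existsP [g /andP [_ H]]]; first by left; rewrite /latt H.
have [gf|gf] := eqVneq g f.
  by subst g; right; case/or4P: H => /eqP ->; [constructor 1|constructor 2|constructor 3|constructor 4].
left; apply/orP; right; apply/existsP; exists g; by rewrite inE /= gf.
Qed.

Lemma latt_sub D (x : pt) : latt ends D x -> latt ends predT x.
Proof.
case/orP => [H | /existsP [g /andP [_ H]]]; apply/orP; [by left|right].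
by apply/existsP; exists g.
Qed.

Lemma latt_pts : [/\ latt ends predT ef, latt ends predT et, latt ends predT el,
  latt ends predT er & forall w : V, latt ends (predC1 f) (eV R E w)].
Proof.
split; try (apply/orP; right; apply/existsP; exists f; by rewrite !eqxx ?orbT).
by move=> w; apply/orP; left; apply/existsP; exists w.
Qed.

Lemma val_f : [/\ ef (inr f) = 1, et (inr f) = -1, el (inr f) = 1 & er (inr f) = 1].
Proof. by rewrite eE_f et_f el_f er_f eqxx. Qed.

Lemma rel1 : et + el = eu *+ 2.
Proof. rewrite /etilde /eleft; apply/ffunP => i; rewrite !ffunE. ring. Qed.
Lemma rel2 : et + er = ev *+ 2.
Proof. rewrite /etilde /eright; apply/ffunP => i; rewrite !ffunE. ring. Qed.
Lemma rel3 : et + ef = eu + ev.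
Proof. rewrite /etilde; apply/ffunP => i; rewrite !ffunE. ring. Qed.

Lemma midpoint (A : pred pt) psi C (a b m : pt) : rcell A psi C -> aff_indep C -> m \in C ->
  A a -> A b -> a != b -> a + b = m *+ 2 -> psi m *+ 2 < psi a + psi b.
Proof.
move=> [CA [c [c0 Hc]]] Hind mC Aa Ab ab Eab.
have [_ Hm] := Hc m (CA m mC); rewrite mC -/(lf c m) in Hm; move/eqP: Hm => Hm.
have hsum : (lf c a + c0) + (lf c b + c0) = (lf c m + c0) *+ 2.
  by rewrite addrACA -lfD Eab lfMn mulrnDl mulr2n.
rewrite ltNge; apply/negP => Hle.
have [Ha1 Ha2] := Hc a Aa; have [Hb1 Hb2] := Hc b Ab.
rewrite -/(lf c a) in Ha1 Ha2; rewrite -/(lf c b) in Hb1 Hb2.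
rewrite Hm mulr2n in hsum; rewrite mulr2n in Hle.
have ea : lf c a + c0 = psi a by lra.
have eb : lf c b + c0 = psi b by lra.
have aC : a \in C by rewrite -Ha2 ea eqxx.
have bC : b \in C by rewrite -Hb2 eb eqxx.
have am : m != a.
  apply: contraNneq ab => ma; move: Eab; rewrite -ma mulr2n => /addrI ->. by [].
have bm : m != b.
  apply: contraNneq ab => mb; move: Eab; rewrite -mb mulr2n => /addIr ->. by [].
pose lam x := (a == x)%:R + (b == x)%:R - (m == x)%:R - (m == x)%:R : R.
have key : forall F : pt -> R, \sum_(x <- C) lam x * F x = F a + F b - F m - F m.
  move=> F; rewrite /lam.
  under eq_bigr do rewrite !mulrDl !mulNr.
  by rewrite !big_split /= !sumrN !sum_delta ?fset_uniq.
have K1 : \sum_(x <- C) lam x = 0.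
  rewrite (eq_bigr (fun x => lam x * (fun=> 1) x)) ?key; last by move=> *; rewrite mulr1.
  by rewrite addrK subrr.
have K2 : forall i, \sum_(x <- C) lam x * x i = 0.
  move=> i; rewrite key; have := congr1 (fun y : pt => y i) Eab; rewrite /= !ffunE => ->.
  by rewrite addrK subrr.
have := Hind lam K1 K2 a aC; rewrite /lam eqxx (negbTE am) eq_sym (negbTE ab) addr0 !subr0.
by move/eqP; rewrite oner_eq0.
Qed.

Lemma neq_f (x y : pt) : x (inr f) != y (inr f) -> x != y.
Proof. by apply: contraNneq => ->. Qed.

Lemma n1m1 : (1 : R) != -1. Proof. by apply/eqP; lra. Qed.
Lemma n10 : (1 : R) != 0. Proof. exact: oner_neq0. Qed.
Lemma nm10 : (-1 : R) != 0. Proof. by rewrite oppr_eq0 oner_neq0. Qed.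

Lemma et_ne_el : et != el. Proof. by apply: neq_f; rewrite et_f el_f eqxx eq_sym n1m1. Qed.
Lemma et_ne_er : et != er. Proof. by apply: neq_f; rewrite et_f er_f eqxx eq_sym n1m1. Qed.

Variable psi : pt -> R.
Hypothesis Hg : good_height ends psi.

Lemma vert_ineq a b (w : V) : latt ends predT a -> latt ends predT b -> a != b ->
  a + b = eV R E w *+ 2 -> psi (eV R E w) *+ 2 < psi a + psi b.
Proof.
case: Hg => Hind Hvert _ _ La Lb ab Eab.
have [latf late latl latr latw] := latt_pts.
have [C [HC wC]] := Hvert (eV R E w) (latt_sub (latw w)).
exact: midpoint HC (Hind _ HC) wC La Lb ab Eab.
Qed.

Lemma F2 : psi eu *+ 2 < psi et + psi el.
Proof.
have [latf late latl latr latw] := latt_pts.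
exact: vert_ineq late latl et_ne_el rel1.
Qed.

Lemma F3 : psi ev *+ 2 < psi et + psi er.
Proof.
have [latf late latl latr latw] := latt_pts.
exact: vert_ineq late latr et_ne_er rel2.
Qed.

Lemma F1 : psi eu + psi ev < psi et + psi ef.
Proof.
case: Hg => _ _ [_ [c [c0 Hc]]] _.
have [latf late latl latr latw] := latt_pts.
have inV : forall w, eV R E w \in std_simplex R V E.
  by move=> w; apply/fsetUP; left; apply/imfsetP; exists w => //=; rewrite mem_enum.
have efin : ef \in std_simplex R V E.
  by apply/fsetUP; right; apply/imfsetP; exists f => //=; rewrite mem_enum.
have etnin : et \notin std_simplex R V E.
  apply/negP; case/fsetUP => /imfsetP [w _ Hw].
    move: (congr1 (fun y : pt => y (inr f)) Hw) => /=; rewrite et_f eV_f eqxx /=.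
    lra.
  move: (congr1 (fun y : pt => y (inr f)) Hw) => /=; rewrite et_f eE_f eqxx.
  by case: (w == f) => /=; lra.
have [Hu1 Hu2] := Hc _ (latt_sub (latw (ends f).1)).
have [Hv1 Hv2] := Hc _ (latt_sub (latw (ends f).2)).
have [Hf1 Hf2] := Hc _ latf.
have [Ht1 Ht2] := Hc _ late.
rewrite inV in Hu2; rewrite inV in Hv2; rewrite efin in Hf2; rewrite (negbTE etnin) in Ht2.
rewrite -!/(lf c _) in Hu1 Hu2 Hv1 Hv2 Hf1 Hf2 Ht1 Ht2.
move/eqP: Hu2 => Hu2; move/eqP: Hv2 => Hv2; move/eqP: Hf2 => Hf2.
have Ht : lf c et + c0 < psi et by rewrite lt_def Ht1 andbT eq_sym Ht2.
have Hr : lf c et + lf c ef = lf c eu + lf c ev by rewrite -!lfD rel3.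
lra.
Qed.

Variable S : {fset pt}.
Hypothesis HS : {subset S <= latt ends (predC1 f)}.

Lemma notS (x : pt) : x (inr f) != 0 -> x \notin S.
Proof. by apply: contra => /HS /lattC1_f ->. Qed.

Lemma ne_et (x : pt) : latt ends (predC1 f) x -> (x == et) = false.
Proof. by move/lattC1_f => Hx; apply/negbTE/neq_f; rewrite Hx et_f eqxx eq_sym nm10. Qed.

Lemma lf_shift (c x : pt) (t : R) :
  \sum_i [ffun i => c i + t * eE R V f i] i * x i = lf c x + t * x (inr f).
Proof. by rewrite -/(lf _ x) lf_lin lf_eEc. Qed.

Lemma part12 : rcell (latt ends (predC1 f)) psi S -> rcell (latt ends predT) psi (et |` S)%fset.
Proof.
move=> [_ [c [c0 Hc]]].
have [latf late latl latr latw] := latt_pts.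
set t := lf c et + c0 - psi et.
split.
  by move=> x; rewrite in_fsetU1 => /orP [/eqP -> | /HS /latt_sub].
exists [ffun i => c i + t * eE R V f i], c0 => x Ax.
rewrite lf_shift.
have [Hu1 _] := Hc _ (latw (ends f).1).
have [Hv1 _] := Hc _ (latw (ends f).2).
rewrite -/(lf c eu) in Hu1; rewrite -/(lf c ev) in Hv1.
have [val1 val2 val3 val4] := val_f.
case: (latt_class Ax) => [Hx | [->|->|->|->]].
- rewrite (lattC1_f Hx) mulr0 addr0 in_fsetU1 ne_et //=.
  by have := Hc x Hx.
- rewrite in_fsetU1 (negbTE (notS _)) ?val1 ?n10 // orbF.
  rewrite (negbTE (neq_f _)) ?val1 ?val2 ?n1m1 //.
  have Hr : lf c et + lf c ef = lf c eu + lf c ev by rewrite -!lfD rel3.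
  have := F1; rewrite /t => H.
  have Hlt : lf c ef + (lf c et + c0 - psi et) * 1 + c0 < psi ef by lra.
  by rewrite ltW // lt_eqF.
- rewrite in_fsetU1 eqxx val2 /t.
  have -> : lf c et + (lf c et + c0 - psi et) * -1 + c0 = psi et by ring.
  by rewrite lexx eqxx.
- rewrite in_fsetU1 (negbTE (notS _)) ?val3 ?n10 // orbF.
  rewrite (eq_sym el) (negbTE et_ne_el).
  have Hr : lf c et + lf c el = lf c eu *+ 2 by rewrite -lfD rel1 lfMn.
  have := F2; rewrite /t !mulr2n in Hr * => H.
  have Hlt : lf c el + (lf c et + c0 - psi et) * 1 + c0 < psi el by lra.
  by rewrite ltW // lt_eqF.
- rewrite in_fsetU1 (negbTE (notS _)) ?val4 ?n10 // orbF.
  rewrite (eq_sym er) (negbTE et_ne_er).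
  have Hr : lf c et + lf c er = lf c ev *+ 2 by rewrite -lfD rel2 lfMn.
  have := F3; rewrite /t !mulr2n in Hr * => H.
  have Hlt : lf c er + (lf c et + c0 - psi et) * 1 + c0 < psi er by lra.
  by rewrite ltW // lt_eqF.
Qed.

Lemma part21 : rcell (latt ends predT) psi (et |` S)%fset -> rcell (latt ends (predC1 f)) psi S.
Proof.
move=> [_ [c [c0 Hc]]]; split => //; exists c, c0 => x Ax.
by have := Hc x (latt_sub Ax); rewrite in_fsetU1 ne_et.
Qed.

Lemma part32 (a : pt) : latt ends predT a -> a (inr f) = 1 ->
  rcell (latt ends predT) psi (a |` S)%fset -> rcell (latt ends predT) psi (et |` S)%fset.
Proof.
move=> La af [_ [c [c0 Hc]]].
have [latf late latl latr latw] := latt_pts.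
have [val1 val2 val3 val4] := val_f.
have eta : (et == a) = false by apply/negbTE/neq_f; rewrite af val2 eq_sym n1m1.
have etS : et \notin S by apply: notS; rewrite val2 nm10.
have [Ht1 Ht2] := Hc _ late; rewrite in_fsetU1 eta (negbTE etS) -/(lf c et) in Ht2 Ht1.
have Ht : lf c et + c0 < psi et by rewrite lt_def Ht1 andbT eq_sym Ht2.
set t := psi et - (lf c et + c0).
split.
  by move=> x; rewrite in_fsetU1 => /orP [/eqP -> | /HS /latt_sub].
exists [ffun i => c i + (- t) * eE R V f i], c0 => x Ax.
rewrite lf_shift.
have one : forall y, latt ends predT y -> y (inr f) = 1 ->
   lf c y + - t * y (inr f) + c0 <= psi y /\ (lf c y + - t * y (inr f) + c0 == psi y) = (y \in (et |` S)%fset).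
  move=> y Ly yf; rewrite yf in_fsetU1 (negbTE (notS _)) ?yf ?n10 // orbF.
  rewrite (negbTE (neq_f _)) ?yf ?val2 ?n1m1 //.
  have [Hy1 _] := Hc y Ly; rewrite -/(lf c y) in Hy1.
  have Hlt : lf c y + - t * 1 + c0 < psi y by rewrite /t; lra.
  by rewrite ltW // lt_eqF.
case: (latt_class Ax) => [Hx | [->|->|->|->]]; try exact: one.
  rewrite (lattC1_f Hx) mulr0 addr0 in_fsetU1 ne_et //=.
  have := Hc x (latt_sub Hx); rewrite in_fsetU1 (negbTE (neq_f _)) //.
  by rewrite (lattC1_f Hx) af eq_sym n10.
rewrite in_fsetU1 eqxx val2 /t.
have -> : lf c et + - (psi et - (lf c et + c0)) * -1 + c0 = psi et by ring.
by rewrite lexx eqxx.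
Qed.

Lemma part23 : rcell (latt ends predT) psi (et |` S)%fset ->
  [\/ rcell (latt ends predT) psi (ef |` S)%fset,
       rcell (latt ends predT) psi (er |` S)%fset |
       rcell (latt ends predT) psi (el |` S)%fset].
Proof.
move=> HC; have HC' := HC; move: HC => [_ [c [c0 Hc]]].
have [latf late latl latr latw] := latt_pts.
have [val1 val2 val3 val4] := val_f.
pose d y := psi y - (lf c y + c0).
have dpos : forall y, latt ends predT y -> y (inr f) = 1 -> 0 < d y.
  move=> y Ly yf; have [Hy1 Hy2] := Hc y Ly.
  rewrite in_fsetU1 (negbTE (notS _)) ?yf ?n10 // orbF in Hy2.
  rewrite (negbTE (neq_f _)) ?yf ?val2 ?n1m1 // -/(lf c y) in Hy2.
  rewrite -/(lf c y) in Hy1.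
  by rewrite /d subr_gt0 lt_def Hy1 andbT eq_sym Hy2.
set t := Num.min (d ef) (Num.min (d el) (d er)).
have tpos : 0 < t by rewrite /t !lt_min !dpos.
have tle : forall y, y \in [:: ef; el; er] -> t <= d y.
  move=> y; rewrite !inE => /or3P [] /eqP ->; rewrite /t !ge_min lexx ?orbT //.
set Q := (S `|` [fset y in filter (fun y => d y == t) [:: ef; el; er]])%fset.
have inQ : forall x, (x \in Q) = (x \in S) || ((x \in [:: ef; el; er]) && (d x == t)).
  by move=> x; rewrite /Q in_fsetU in_fset mem_filter andbC.
have cellQ : rcell (latt ends predT) psi Q.
  split.
    move=> x; rewrite inQ => /orP [/HS /latt_sub // | /andP [H _]].
    by move: H; rewrite !inE => /or3P [] /eqP ->.
  exists [ffun i => c i + t * eE R V f i], c0 => x Ax.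
  rewrite lf_shift.
  have one : forall y, latt ends predT y -> y (inr f) = 1 -> y \in [:: ef; el; er] ->
     lf c y + t * y (inr f) + c0 <= psi y /\ (lf c y + t * y (inr f) + c0 == psi y) = (y \in Q).
    move=> y Ly yf ys; rewrite yf inQ (negbTE (notS _)) ?yf ?n10 //= ys /=.
    have := tle y ys; rewrite /d => H.
    split; first by lra.
    apply/eqP/eqP => H2; lra.
  case: (latt_class Ax) => [Hx | [->|->|->|->]]; try (apply: one; rewrite // !inE eqxx ?orbT //).
    rewrite (lattC1_f Hx) mulr0 addr0 inQ.
    have -> : (x \in [:: ef; el; er]) = false.
      apply/negP; rewrite !inE => /or3P [] /eqP Ex; move: (lattC1_f Hx); rewrite Ex;
        rewrite ?val1 ?val3 ?val4 => /eqP; by rewrite (negbTE n10).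
    rewrite andFb orbF; have := Hc x (latt_sub Hx); by rewrite in_fsetU1 ne_et.
  rewrite inQ (negbTE (notS _)) ?val2 ?nm10 //=.
  have -> : (et \in [:: ef; el; er]) = false.
    apply/negP; rewrite !inE => /or3P [] /eqP Ex; move: val2; rewrite Ex ?val1 ?val3 ?val4 => H; lra.
  have [Ht1 Ht2] := Hc et late; rewrite in_fsetU1 eqxx -/(lf c et) in Ht1 Ht2.
  move/eqP: Ht2 => Ht2.
  have Hlt : lf c et + t * -1 + c0 < psi et by lra.
  by rewrite andFb ltW // lt_eqF.
case: Hg => Hind _ _ _.
have fs : forall y, d y == t -> y \in [:: ef; el; er] -> rcell (latt ends predT) psi (y |` S)%fset.
  move=> y dy ys; apply: (face_sub (@latt_LL predT) Hind cellQ).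
  apply/fsubsetP => x; rewrite in_fsetU1 inQ => /orP [/eqP -> | ->]; last by [].
  by rewrite ys dy orbT.
have [h1|h1] := leP (d ef) (Num.min (d el) (d er)).
  by constructor 1; apply: fs; rewrite ?inE ?eqxx // /t min_l.
have [h2|h2] := leP (d el) (d er).
  constructor 3; apply: fs; rewrite ?inE ?eqxx ?orbT //.
  by rewrite /t (min_r (ltW h1)) (min_l h2).
constructor 2; apply: fs; rewrite ?inE ?eqxx ?orbT //.
by rewrite /t (min_r (ltW h1)) (min_r (ltW h2)).
Qed.
End G.

Unset Implicit Arguments.
Set Strict Implicit.

Theorem mainTheorem1 (R : realFieldType) (V E : finType) (ends : E -> V * V)
    (f : E) (psi : point R V E -> R) :
  @good_height R V E ends psi ->
  forall S : {fset point R V E},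
    {subset S <= @latt R V E ends (predC1 f)} ->
    (@rcell R V E (@latt R V E ends (predC1 f)) psi S <->
       @rcell R V E (@latt R V E ends predT) psi (@etilde R V E ends f |` S)%fset) /\
    (@rcell R V E (@latt R V E ends predT) psi (@etilde R V E ends f |` S)%fset <->
       [\/ @rcell R V E (@latt R V E ends predT) psi (@eE R V E f |` S)%fset,
           @rcell R V E (@latt R V E ends predT) psi (@eright R V E ends f |` S)%fset |
           @rcell R V E (@latt R V E ends predT) psi (@eleft R V E ends f |` S)%fset]).
Proof.
move=> Hg S HS.
have [latf late latl latr latw] := latt_pts R ends f.
have [val1 val2 val3 val4] := val_f R ends f.
split; split.
- exact (part12 Hg HS).
- exact (part21 HS).
- exact (part23 Hg HS).
case=> H.
- exact (part32 HS latf val1 H).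
- exact (part32 HS latr val4 H).
- exact (part32 HS latl val3 H).
Qed.
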